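(* Let $L_0\supseteq\mathbf T$ be a normal modal logic that is complete with respect to a class $C$ of Kripke or general frames such that $2\mathcal W$ is an $L_0$-frame for every $\mathcal W\in C$. Let $\varphi\notin L_0$ and let $q$ be a variable not occurring in $\varphi$. Let $$X=\{\Box(q^e\to\psi)\to\psi:\ e\in\{0,1\},\ \Box\psi\in\mathrm{Sub}(\varphi)\},$$ where $q^1=q$ and $q^0=\neg q$. Then $X\nvdash_{L_0}\varphi$. Consequently, for every $n$, the formula $\Box^n\bigwedge X\to\varphi$ does not belong to $L_0$.
   Context: A normal modal logic (nml) contains all tautologies and $\Box(p\to q)\to(\Box p\to\Box q)$, and is closed under modus ponens, necessitation and substitution. $\mathbf T=\mathbf K\oplus(\Box p\to p)$. $\mathrm{Sub}(\varphi)$ is the set of subformulas of $\varphi$, and $\Box^n$ denotes $n$ nested boxes. $Y\vdash_L\theta$ (global consequence) means that $\theta$ has a finite derivation from elements of $Y$ and theorems of $L$ using modus ponens and necessitation. A general frame is a triple $\langle W,R,A\rangle$ with $A\subseteq\mathcal P(W)$ closed under Boolean operations and under $\Box X=\{w:\forall v\,(wRv\Rightarrow v\in X)\}$. A Kripke frame $\langle W,R\rangle$ is identified with $\langle W,R,\mathcal P(W)\rangle$. Models based on a general frame assign admissible sets to variables. Validity means truth everywhere in all such models. An $L$-frame validates all of $L$, and completeness with respect to $C$ means that every non-theorem is invalid in some frame of $C$. The frame $2\mathcal W=\langle W\times\{0,1\},2R,2A\rangle$ is given by $\langle w,a\rangle\,2R\,\langle v,b\rangle$ iff $wRv$, and $2A=\{(X\times\{0\})\cup(Y\times\{1\}):X,Y\in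 A\}$. For Kripke frames, $2A$ is the full powerset. *)

(* Defs.v *)
From Stdlib Require Import List.
Import ListNotations.

Inductive form : Type :=
| Var : nat -> form
| Bot : form
| Imp : form -> form -> form
| Box : form -> form.

Definition Neg (a : form) : form := Imp a Bot.
Definition Top : form := Neg Bot.
Definition And (a b : form) : form := Neg (Imp a (Neg b)).

Fixpoint bigAnd (l : list form) : form :=
  match l with
  | [] => Top
  | [a] => a
  | a :: l' => And a (bigAnd l')
  end.

Fixpoint boxn (n : nat) (a : form) : form :=
  match n with
  | 0 => a
  | S n' => Box (boxn n' a)
  end.

Fixpoint subst (s : nat -> form) (a : form) : form :=
  match a with
  | Var n => s n
  | Bot => Bot
  | Imp a b => Imp (subst s a) (subst s b)
  | Box a => Box (subst s a)
  end.

Fixpoint occurs (n : nat) (a : form) : Prop :=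
  match a with
  | Var m => m = n
  | Bot => False
  | Imp a b => occurs n a \/ occurs n b
  | Box a => occurs n a
  end.

Fixpoint sub (a : form) : list form :=
  match a with
  | Var n => [Var n]
  | Bot => [Bot]
  | Imp b c => Imp b c :: (sub b ++ sub c)
  | Box b => Box b :: sub b
  end.

(** Propositional tautologies: true under every boolean valuation treating
    variables and boxed formulas as atoms. *)
Fixpoint beval (v : form -> bool) (a : form) : bool :=
  match a with
  | Var n => v (Var n)
  | Bot => false
  | Imp b c => implb (beval v b) (beval v c)
  | Box b => v (Box b)
  end.

Definition tautology (a : form) : Prop := forall v : form -> bool, beval v a = true.

Definition Kax : form :=
  Imp (Box (Imp (Var 0) (Var 1))) (Imp (Box (Var 0)) (Box (Var 1))).

Definition normal (L : form -> Prop) : Prop :=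
  (forall a, tautology a -> L a) /\
  L Kax /\
  (forall a b, L (Imp a b) -> L a -> L b) /\
  (forall a, L a -> L (Box a)) /\
  (forall s a, L a -> L (subst s a)).

Inductive Kplus (A : form -> Prop) : form -> Prop :=
| Kp_taut : forall a, tautology a -> Kplus A a
| Kp_K : Kplus A Kax
| Kp_ax : forall a, A a -> Kplus A a
| Kp_mp : forall a b, Kplus A (Imp a b) -> Kplus A a -> Kplus A b
| Kp_nec : forall a, Kplus A a -> Kplus A (Box a)
| Kp_subst : forall s a, Kplus A a -> Kplus A (subst s a).

Definition Tlogic : form -> Prop :=
  Kplus (fun a => a = Imp (Box (Var 0)) (Var 0)).

Inductive gderiv (L : form -> Prop) (Y : form -> Prop) : form -> Prop :=
| gd_hyp : forall a, Y a -> gderiv L Y a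
| gd_thm : forall a, L a -> gderiv L Y a
| gd_mp : forall a b, gderiv L Y (Imp a b) -> gderiv L Y a -> gderiv L Y b
| gd_nec : forall a, gderiv L Y a -> gderiv L Y (Box a).

Record gframe : Type := GFrame {
  gW : Type;
  gR : gW -> gW -> Prop;
  gA : (gW -> Prop) -> Prop
}.

Definition boxset (F : gframe) (X : gW F -> Prop) : gW F -> Prop :=
  fun w => forall v, gR F w v -> X v.

Definition is_gframe (F : gframe) : Prop :=
  gA F (fun _ => False) /\
  (forall X, gA F X -> gA F (fun w => ~ X w)) /\
  (forall X Y, gA F X -> gA F Y -> gA F (fun w => X w /\ Y w)) /\
  (forall X, gA F X -> gA F (boxset F X)).

(** Kripke frame <W,R> identified with <W,R,P(W)>. *)
Definition kripke (W : Type) (R : W -> W -> Prop) : gframe :=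
  GFrame W R (fun _ => True).

Fixpoint sat (F : gframe) (V : nat -> gW F -> Prop) (w : gW F) (a : form) : Prop :=
  match a with
  | Var n => V n w
  | Bot => False
  | Imp b c => sat F V w b -> sat F V w c
  | Box b => forall v, gR F w v -> sat F V v b
  end.

Definition admissible_val (F : gframe) (V : nat -> gW F -> Prop) : Prop :=
  forall n, gA F (V n).

Definition valid (F : gframe) (a : form) : Prop :=
  forall V, admissible_val F V -> forall w, sat F V w a.

Definition Lframe (L : form -> Prop) (F : gframe) : Prop :=
  forall a, L a -> valid F a.

Definition complete_wrt (L : form -> Prop) (C : gframe -> Prop) : Prop :=
  forall a, ~ L a -> exists F, C F /\ ~ valid F a.

Definition two (F : gframe) : gframe :=
  GFrame (gW F * bool)
    (fun x y => gR F (fst x) (fst y))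
    (fun Z => exists X Y, gA F X /\ gA F Y /\
       forall w b, Z (w, b) <-> (if b then Y w else X w)).

Definition qpow (q : nat) (e : bool) : form := if e then Var q else Neg (Var q).

Definition Xlist (q : nat) (phi : form) : list form :=
  flat_map (fun s => match s with
                     | Box psi => [Imp (Box (Imp (qpow q true) psi)) psi;
                                   Imp (Box (Imp (qpow q false) psi)) psi]
                     | _ => []
                     end) (sub phi).

(* Main.v *)
Require Import Defs.
From Stdlib Require Import List.
Import ListNotations.

Lemma sub_occ q : forall phi s, In s (sub phi) -> occurs q s -> occurs q phi.
Proof.
  induction phi; simpl; intros s Hs Ho.
  - destruct Hs as [<-|[]]; exact Ho.
  - destruct Hs as [<-|[]]; exact Ho.
  - destruct Hs as [<-|Hs]; [exact Ho|].
    apply in_app_or in Hs; destruct Hs as [Hs|Hs]; eauto.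
  - destruct Hs as [<-|Hs]; [exact Ho|]; eauto.
Qed.

Definition Vq (F : gframe) (V : nat -> gW F -> Prop) (q : nat) :
  nat -> gW (two F) -> Prop :=
  fun n x => if PeanoNat.Nat.eq_dec n q then snd x = true else V n (fst x).

Lemma transfer F V q : forall psi, ~ occurs q psi -> forall w b,
  sat (two F) (Vq F V q) (w, b) psi <-> sat F V w psi.
Proof.
  induction psi; simpl; intros Ho w b.
  - unfold Vq; simpl. destruct (PeanoNat.Nat.eq_dec n q); [congruence|tauto].
  - tauto.
  - rewrite IHpsi1, IHpsi2 by tauto. tauto.
  - split.
    + intros H v Hv. apply (IHpsi Ho v b). apply (H (v, b)). exact Hv.
    + intros H [v b'] Hv. apply IHpsi; auto.
Qed.

Lemma gsound L Y (M : gframe) V :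
  Lframe L M -> admissible_val M V ->
  (forall a, Y a -> forall x, sat M V x a) ->
  forall a, gderiv L Y a -> forall x, sat M V x a.
Proof.
  intros HL HV HY a D; induction D; intros x.
  - apply HY; auto.
  - apply HL; auto.
  - simpl in IHD1. apply IHD1; auto.
  - simpl. intros; auto.
Qed.

Lemma Xlist_inv q phi a : In a (Xlist q phi) ->
  exists psi e, In (Box psi) (sub phi) /\ a = Imp (Box (Imp (qpow q e) psi)) psi.
Proof.
  unfold Xlist. intro H. apply in_flat_map in H. destruct H as [s [Hs Ha]].
  destruct s; simpl in Ha; try contradiction.
  destruct Ha as [<-|[<-|[]]]; [exists s, true|exists s, false]; auto.
Qed.

Lemma bigAnd_deriv L Y (HL : normal L) : forall l,
  (forall a, In a l -> gderiv L Y a) -> gderiv L Y (bigAnd l).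
Proof.
  destruct HL as [Ht _].
  induction l as [|a l IH]; intros H.
  - apply gd_thm, Ht. intro v; reflexivity.
  - destruct l as [|b l'].
    + apply H; simpl; auto.
    + change (gderiv L Y (And a (bigAnd (b :: l')))).
      apply gd_mp with (bigAnd (b :: l')).
      * apply gd_mp with a.
        -- apply gd_thm, Ht. generalize (bigAnd (b :: l')). intros c v.
           unfold And, Neg; simpl.
           destruct (beval v a), (beval v c); reflexivity.
        -- apply H; simpl; auto.
      * apply IH. intros; apply H; simpl; auto.
Qed.

Theorem mainTheorem5 (L0 : form -> Prop) (C : gframe -> Prop)
  (HL0 : normal L0)
  (HT : forall a, Tlogic a -> L0 a)
  (HCg : forall F, C F -> is_gframe F)
  (Hcomp : complete_wrt L0 C)
  (H2 : forall F, C F -> Lframe L0 (two F))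
  (phi : form) (Hphi : ~ L0 phi)
  (q : nat) (Hq : ~ occurs q phi) :
  ~ gderiv L0 (fun a => In a (Xlist q phi)) phi /\
  (forall n : nat, ~ L0 (Imp (boxn n (bigAnd (Xlist q phi))) phi)).
Proof.
  assert (A : ~ gderiv L0 (fun a => In a (Xlist q phi)) phi).
  { intro D. destruct (Hcomp phi Hphi) as [F [HF Hv]]. apply Hv.
    intros V HV w.
    destruct (HCg F HF) as [H0 [HC _]].
    assert (HV' : admissible_val (two F) (Vq F V q)).
    { intro n. unfold Vq; simpl. destruct (PeanoNat.Nat.eq_dec n q).
      - exists (fun _ => False), (fun w => ~ False). split; [exact H0|].
        split; [apply HC, H0|]. intros w' b; simpl; destruct b; simpl; split;
          intros; try congruence; try tauto.
      - exists (V n), (V n). repeat split; auto; destruct b; auto. }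
    apply (transfer F V q phi Hq w false).
    apply (gsound L0 (fun a => In a (Xlist q phi)) (two F) (Vq F V q) (H2 F HF) HV'); [|exact D].
    intros a Ha [w' b].
    destruct (Xlist_inv q phi a Ha) as [psi [e [Hin ->]]].
    assert (Hpsi : ~ occurs q psi).
    { intro Ho. apply Hq. apply (sub_occ q phi (Box psi) Hin). exact Ho. }
    assert (HTi : L0 (Imp (Box psi) psi)).
    { apply HT. apply (Kp_subst _ (fun _ => psi) (Imp (Box (Var 0)) (Var 0))).
      apply Kp_ax. reflexivity. }
    intro HB. apply (H2 F HF _ HTi (Vq F V q) HV' (w', b)).
    intros [v b'] Hrv. simpl in Hrv.
    apply (transfer F V q psi Hpsi v b').
    apply (transfer F V q psi Hpsi v e).
    apply (HB (v, e)); [exact Hrv|].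
    unfold qpow; destruct e; simpl; unfold Vq; simpl;
      destruct (PeanoNat.Nat.eq_dec q q); try congruence; intro; discriminate. }
  split; [exact A|].
  intros n Hn. apply A.
  apply gd_mp with (boxn n (bigAnd (Xlist q phi))).
  - apply gd_thm; exact Hn.
  - assert (Hb : gderiv L0 (fun a => In a (Xlist q phi)) (bigAnd (Xlist q phi))).
    { apply bigAnd_deriv; auto. intros; apply gd_hyp; auto. }
    clear Hn. induction n; simpl; [exact Hb|]. apply gd_nec; exact IHn.
Qed.
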